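(* Let $\sigma$ be a linear extension of $\preceq$ and let $(r,k)$ be a bounding state satisfying the Active-item and Partial-order invariants such that $(r,k)$ bounds $\sigma$. Let $i\in\{1,\dots,n-1\}$ and $c\in\{0,1\}$, and define $c'=1-c$ if $\sigma(i)=r(i+1)$ and $c'=c$ otherwise. Then $\mathrm{AT}(\sigma,i,c')$ is bounded by $\mathrm{BC}((r,k),i,c)$.
   Context: Let $\preceq$ be a partial order on $S=\{1,\dots,n\}$, $n\ge2$, such that the identity permutation is a linear extension ($a\preceq b$ implies $a\le b$). A permutation is written $\sigma=(\sigma(1),\dots,\sigma(n))$ with $\sigma(p)$ the item in position $p$; it is a linear extension if for all $p<q$, $\neg(\sigma(q)\preceq\sigma(p))$. $\mathrm{AT}(\sigma,i,c)$: if $c=1$ and $\neg(\sigma(i)\preceq\sigma(i+1))$, swap the entries in positions $i,i+1$; return the result. Introduce a symbol $*$ and declare every comparison $x\preceq y$ in which $x$ or $y$ is $*$ to be false. A bounding state is a pair $(r,k)$ with $r\in(\{*\}\cup S)^n$, $k\in\{1,\dots,n\}$, whose non-$*$ entries are exactly $1,\dots,k$ (active items), each appearing once. Active-item invariant: every $a\le k$ appears in $r$. Partial-order invariant: if $r(p)=a\le k$, $r(q)=b\le k$, $a\neq b$, $a\preceq b$, then $p<q$. $(r,k)$ bounds $\sigma$ if for all $a\le k$ and all positions $p,q$: $\sigma(p)=a$ and $r(q)=a$ imply $p\le q$. $\mathrm{BC}((r,k),i,c)$: (1) if $c=1$ and $\neg(r(i)\preceq r(i+1))$, swap $r(i),r(i+1)$;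 (2) if now $r(n)=*$, set $r(n)\leftarrow k+1$, $k\leftarrow k+1$; (3) return $(r,k)$. *)

(* Defs.v *)
(* Items and positions are natural numbers in
   {1,...,n}; permutations are functions nat -> nat, bounding-state
   sequences are functions nat -> option nat (None = the symbol * ). *)
From mathcomp Require Import all_boot.
Set Implicit Arguments. Unset Strict Implicit. Unset Printing Implicit Defensive.

Definition inS (n x : nat) : bool := (1 <= x) && (x <= n).

Definition partial_order_on (n : nat) (le : nat -> nat -> bool) : Prop :=
  (forall a, inS n a -> le a a) /\
  (forall a b, inS n a -> inS n b -> le a b -> le b a -> a = b) /\
  (forall a b c, inS n a -> inS n b -> inS n c -> le a b -> le b c -> le a c).

Definition id_linext (n : nat) (le : nat -> nat -> bool) : Prop :=
  forall a b, inS n a -> inS n b -> le a b -> a <= b.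

(* sigma is a permutation of {1..n}: sigma p = item at position p *)
Definition is_perm (n : nat) (sigma : nat -> nat) : Prop :=
  (forall p, inS n p -> inS n (sigma p)) /\
  (forall p q, inS n p -> inS n q -> sigma p = sigma q -> p = q).

Definition linear_extension (n : nat) (le : nat -> nat -> bool)
  (sigma : nat -> nat) : Prop :=
  is_perm n sigma /\
  forall p q, inS n p -> inS n q -> p < q -> ~~ le (sigma q) (sigma p).

Definition swap_at {T} (f : nat -> T) (i : nat) : nat -> T :=
  fun p => if p == i then f i.+1 else if p == i.+1 then f i else f p.

Definition AT (le : nat -> nat -> bool) (sigma : nat -> nat) (i : nat)
  (c : bool) : nat -> nat :=
  if c && ~~ le (sigma i) (sigma i.+1) then swap_at sigma i else sigma.

Definition leo (le : nat -> nat -> bool) (x y : option nat) : bool :=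
  match x, y with Some a, Some b => le a b | _, _ => false end.

Definition bounding_state (n : nat) (r : nat -> option nat) (k : nat) : Prop :=
  inS n k /\
  (forall p a, inS n p -> r p = Some a -> (1 <= a) && (a <= k)) /\
  (forall a, (1 <= a) && (a <= k) -> exists p, inS n p /\ r p = Some a) /\
  (forall p q a, inS n p -> inS n q -> r p = Some a -> r q = Some a -> p = q).

Definition active_item_inv (n : nat) (r : nat -> option nat) (k : nat) : Prop :=
  forall a, (1 <= a) && (a <= k) -> exists p, inS n p /\ r p = Some a.

Definition partial_order_inv (n : nat) (le : nat -> nat -> bool)
  (r : nat -> option nat) (k : nat) : Prop :=
  forall p q a b, inS n p -> inS n q ->
    r p = Some a -> r q = Some b -> (1 <= a) && (a <= k) -> (1 <= b) && (b <= k) ->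
    a <> b -> le a b -> p < q.

Definition bounds (n : nat) (r : nat -> option nat) (k : nat)
  (sigma : nat -> nat) : Prop :=
  forall a p q, (1 <= a) && (a <= k) -> inS n p -> inS n q ->
    sigma p = a -> r q = Some a -> p <= q.

Definition BC (n : nat) (le : nat -> nat -> bool) (r : nat -> option nat)
  (k : nat) (i : nat) (c : bool) : (nat -> option nat) * nat :=
  let r1 := if c && ~~ leo le (r i) (r i.+1) then swap_at r i else r in
  if r1 n is None then
    ((fun p => if p == n then Some k.+1 else r1 p), k.+1)
  else (r1, k).

(* Main.v *)
Require Import Defs.
From mathcomp Require Import all_boot zify.

Lemma perm_surj n s : is_perm n s -> forall b, inS n b -> exists p, inS n p /\ s p = b.
Proof.
move=> [Hr Hinj] b Hbn.
have mI x : (x \in iota 1 n) = inS n x by rewrite mem_iota /inS; lia.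
have U : uniq (map s (iota 1 n)).
  rewrite map_inj_in_uniq ?iota_uniq // => x y; rewrite !mI; exact: Hinj.
have Sub : {subset map s (iota 1 n) <= iota 1 n}.
  by move=> y /mapP [x]; rewrite mI => Hx ->; rewrite mI; apply: Hr.
have [_ E] := uniq_min_size U Sub ltac:(by rewrite size_map).
have : b \in map s (iota 1 n) by rewrite E mI.
by case/mapP => x; rewrite mI => Hx ->; exists x.
Qed.

Lemma key_lemma n le sigma r k i c a p q :
  let c' := if r i.+1 == Some (sigma i) then ~~ c else c in
  k <= n -> id_linext n le ->
  linear_extension n le sigma ->
  (forall p a, inS n p -> r p = Some a -> (1 <= a) && (a <= k)) ->
  (forall p q a, inS n p -> inS n q -> r p = Some a -> r q = Some a -> p = q) ->
  active_item_inv n r k ->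
  partial_order_inv n le r k ->
  (forall a p q, sigma p = a -> r q = Some a -> (1 <= a) && (a <= k) ->
   inS n p -> inS n q -> p <= q) ->
  1 <= i -> i < n ->
  (1 <= a) && (a <= k) -> inS n p -> inS n q ->
  AT le sigma i c' p = a ->
  (if c && ~~ leo le (r i) (r i.+1) then swap_at r i else r) q = Some a -> p <= q.
Proof.
move=> c'; have Ec' : c' = (if r i.+1 == Some (sigma i) then ~~ c else c) by [].
clearbody c'.
move=> Hkn Hid [Hperm Hlx] Hrng Hinj Hact Hpoi Hb2 Hi1 Hi2 Ha Hp Hq; rewrite /AT /swap_at.
have Ii : inS n i by rewrite /inS; lia.
have Ii1 : inS n i.+1 by rewrite /inS; lia.
have Hsurj := @perm_surj n sigma Hperm.
case: (Hperm) => Hsr Hsinj.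
case Esw: (c' && _); case Esr: (c && _).
all: rewrite /inS in Hp Hq.
all: repeat case: ifP => [/eqP ?|/negbT ?].
all: move=> Hs Hr.
all: try (have := Hb2 _ _ _ Hs Hr Ha ltac:(rewrite /inS; lia) ltac:(rewrite /inS; lia); lia).
- rewrite Ec' Hr Hs eqxx in Esw; clear Ec'; move: Esw Esr; case: c => //=; rewrite ?andbF //.
-
  have Hqi : i <= q by have := Hb2 _ _ _ Hs Hr Ha Ii ltac:(rewrite /inS; lia).
  case: (eqVneq q i) => [Eq|]; last by lia.
  subst q.
  have Hne : r i.+1 != Some a.
    apply/eqP => H; have := Hinj _ _ _ Ii Ii1 Hr H; lia.
  rewrite Ec' Hs (negbTE Hne) in Esw.
  move/andP: Esw => [Hc Hnle]; rewrite Hc /= Hr in Esr.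
  move/negbFE: Esr; case Eb: (r i.+1) => [b|] //= Hab.
  have Hb := Hrng _ _ Ii1 Eb.
  have [pb [Ipb Epb]] := Hsurj b ltac:(rewrite /inS; lia).
  have Hpb := Hb2 _ _ _ Epb Eb Hb Ipb Ii1.
  have Hab' : a != b by apply/eqP => E; move: Hne; rewrite Eb -E eqxx.
  case: (ltngtP pb i) => Hpbi.
  + have := Hlx _ _ Ipb Ii Hpbi; rewrite Hs Epb Hab //.
  + have E1 : pb = i.+1 by lia.
    by move: Hnle; rewrite ?Hs -E1 Epb Hab.
  + by move: Hab'; rewrite -Hs -Epb Hpbi eqxx.
- have Hpi : p <= i.+1 := Hb2 _ _ _ Hs Hr Ha ltac:(rewrite /inS; lia) Ii1.
  case: (eqVneq p i.+1) => [Ep|]; last by lia.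
  rewrite Ep in Hs.
  have Hba : sigma i != a.
    apply/eqP => E; have := Hsinj _ _ Ii Ii1; rewrite E Hs => /(_ erefl); lia.
  have Hne : r i.+1 != Some (sigma i).
    by rewrite Hr; apply/eqP => -[E]; move: Hba; rewrite E eqxx.
  rewrite Ec' (negbTE Hne) in Esw.
  move/andP: Esr => [Hc Hnleo]; rewrite Hc /= in Esw.
  have Hle := negbFE Esw; rewrite Hs in Hle.
  have Hbn := Hsr _ Ii.
  have Han : inS n a by rewrite /inS; lia.
  have Hb := Hid _ _ Hbn Han Hle.
  have Hbk : (1 <= sigma i) && (sigma i <= k) by move: Hbn; rewrite /inS; lia.
  have [qb [Iqb Eqb]] := Hact _ Hbk.
  have Hqb := Hb2 _ _ _ (erefl (sigma i)) Eqb Hbk Ii Iqb.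
  case: (ltngtP qb i.+1) => Hq1.
  + have E1 : qb = i by lia.
    by move: Hnleo; rewrite Hr -E1 Eqb /= Hle.
  + have := Hpoi _ _ _ _ Iqb Ii1 Eqb Hr Hbk Ha (elimN eqP Hba) Hle; lia.
  + by move: Eqb; rewrite Hq1 Hr => -[E]; move: Hba; rewrite E eqxx.
Qed.
Theorem theorem2 (n : nat) (le : nat -> nat -> bool) (sigma : nat -> nat)
  (r : nat -> option nat) (k i : nat) (c : bool) :
  2 <= n ->
  partial_order_on n le ->
  id_linext n le ->
  linear_extension n le sigma ->
  bounding_state n r k ->
  active_item_inv n r k ->
  partial_order_inv n le r k ->
  bounds n r k sigma ->
  1 <= i <= n.-1 ->
  let c' := if r i.+1 == Some (sigma i) then ~~ c else c in
  bounds n (BC n le r k i c).1 (BC n le r k i c).2 (AT le sigma i c').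
Proof.
move=> Hn Hpo Hid [Hperm Hlx] [Hk [Hrng [Hact Hinj]]] _ Hpoi Hb /andP[Hi1 Hi2] c'.
have Hb2 : forall a p q, sigma p = a -> r q = Some a -> (1 <= a) && (a <= k) ->
   inS n p -> inS n q -> p <= q.
  by move=> a p q Hs Hr Ha Hp Hq; apply: (Hb a p q).
have Ii : inS n i by rewrite /inS; lia.
have Ii1 : inS n i.+1 by rewrite /inS; lia.
rewrite /BC. set r1 := (if c && _ then _ else _).
have r1rng : forall q a, inS n q -> r1 q = Some a -> (1 <= a) && (a <= k).
  move=> q a Hq; rewrite /r1 /swap_at; case: ifP => _; last exact: Hrng.
  case: eqP => _; first exact: Hrng.
  case: eqP => _; exact: Hrng.
have key : forall a p q, (1 <= a) && (a <= k) -> inS n p -> inS n q ->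
    AT le sigma i c' p = a -> r1 q = Some a -> p <= q.
  move=> a p q Ha Hp Hq Hs Hr.
  have Hkn : k <= n by move: Hk; rewrite /inS; lia.
  exact: (@key_lemma n le sigma r k i c a p q Hkn Hid (conj Hperm Hlx) Hrng Hinj Hact Hpoi Hb2 Hi1 ltac:(lia) Ha Hp Hq Hs Hr).
case E: (r1 n) => [x|] /=; first exact: key.
move=> a p q Ha Hp Hq Hs; case: eqP => [->|Hqn]; first by move: Hp; rewrite /inS; lia.
move=> Hr; have := r1rng _ _ Hq Hr => Ha'; exact: (key a).
Qed.
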